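(* Let $K$ be a field of characteristic zero and $g\ge 3$. Then $$\chi(F_{g,3})=\dim Z(F_{g,3})+\binom{g}{2}-g=\dim F_{g,3}-2g=\frac{2g^3+3g^2-11g}{6}.$$
   Context: For a finite-dimensional Lie algebra $\mathfrak{h}$ over $K$ and $\ell\in\mathfrak{h}^*$, let $\mathfrak{h}(\ell)=\{y\in\mathfrak{h}\mid \ell([x,y])=0\ \forall x\in\mathfrak{h}\}$; the index is $\chi(\mathfrak{h})=\min_{\ell\in\mathfrak{h}^*}\dim\mathfrak{h}(\ell)$. $Z(\mathfrak{h})$ denotes the center. Lower central series: $\mathfrak{h}^1=\mathfrak{h}$, $\mathfrak{h}^{k+1}=[\mathfrak{h},\mathfrak{h}^k]$. $F_g$ is the free Lie algebra on $g$ generators and $F_{g,c}:=F_g/F_g^{c+1}$. One has $\dim F_{g,3}=g(g+1)(2g+1)/6$ and $\dim Z(F_{g,3})=(g^3-g)/3$. *)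

(* Defs.v *)
From HB Require Import structures.
From mathcomp Require Import all_boot all_order all_algebra.
Set Implicit Arguments. Unset Strict Implicit. Unset Printing Implicit Defensive.
Import GRing.Theory.
Local Open Scope ring_scope.

Section Lie.
Variable K : fieldType.

Definition is_lie (M : lmodType K) (br : M -> M -> M) : Prop :=
  [/\ (forall (a : K) x y z, br (a *: x + y) z = a *: br x z + br y z),
      (forall (a : K) x y z, br z (a *: x + y) = a *: br z x + br z y),
      (forall x, br x x = 0) &
      (forall x y z, br x (br y z) + br y (br z x) + br z (br x y) = 0)].

Definition nilp3 (M : lmodType K) (br : M -> M -> M) : Prop :=
  forall a b c d, br a (br b (br c d)) = 0.

Definition lie_hom (L M : lmodType K) (brL : L -> L -> L) (brM : M -> M -> M)
  (f : L -> M) : Prop :=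
  (forall (a : K) x y, f (a *: x + y) = a *: f x + f y) /\
  (forall x y, f (brL x y) = brM (f x) (f y)).

(* (L, br, x) is the free 3-step nilpotent Lie algebra F_{g,3} = F_g / F_g^4
   on the generators x_0, ..., x_{g-1}: characterized by its universal property
   among Lie algebras of nilpotency class <= 3. *)
Definition free_nilp3 (g : nat) (L : lmodType K) (br : L -> L -> L)
  (x : 'I_g -> L) : Prop :=
  [/\ is_lie br, nilp3 br &
      forall (M : lmodType K) (brM : M -> M -> M) (m : 'I_g -> M),
        is_lie brM -> nilp3 brM ->
        (exists f : L -> M, lie_hom br brM f /\ forall i, f (x i) = m i) /\
        (forall f1 f2 : L -> M,
            lie_hom br brM f1 -> (forall i, f1 (x i) = m i) ->
            lie_hom br brM f2 -> (forall i, f2 (x i) = m i) ->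
            forall v, f1 v = f2 v)].

Variable L : vectType K.
Variable br : L -> L -> L.

Definition lie_center : {vspace L} :=
  lker (linfun (fun y : L => linfun (fun x : L => br x y))).

Definition stab (l : 'Hom(L, K^o)) : {vspace L} :=
  lker (linfun (fun y : L => (linfun (fun x : L => l (br x y)) : 'Hom(L, K^o)))).

Definition lie_index (n : nat) : Prop :=
  (exists l : 'Hom(L, K^o), \dim (stab l) = n) /\
  (forall l : 'Hom(L, K^o), (n <= \dim (stab l))%N).

End Lie.

(* Main.v *)
From HB Require Import structures.
Require Import Defs.
From mathcomp Require Import all_boot all_order all_algebra.
From mathcomp Require Import zify ring.
From Stdlib Require Import IndefiniteDescription.
Set Implicit Arguments. Unset Strict Implicit. Unset Printing Implicit Defensive.
Import GRing.Theory.

Definition lab := (nat * nat * nat * nat)%type.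
Definition H1 g : seq lab := [seq (1, i, 0, 0) | i <- iota 0 g].
Fixpoint H2 m : seq lab :=
  if m is m'.+1 then H2 m' ++ [seq (2, a, m', 0) | a <- iota 0 m'] else [::].
Definition trow m : seq (nat * nat) := [seq (m, j) | j <- iota 0 m.+1].
Arguments trow : simpl never.
Fixpoint Tri m : seq (nat * nat) :=
  if m is m'.+1 then Tri m' ++ trow m' else [::].
Definition new3 m : seq lab :=
  [seq (3, m, j, m) | j <- iota 0 m] ++ [seq (3, p.1, p.2, m) | p <- Tri m]
  ++ [seq (3, m, t.1.1.2, t.1.2) | t <- H2 m].
Fixpoint H3 m : seq lab := if m is m'.+1 then H3 m' ++ new3 m' else [::].

Lemma mem_H1 g d i j k : ((d, i, j, k) \in H1 g) = [&& d == 1, i < g, j == 0 & k == 0].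
Proof.
apply/mapP/idP.
- by case=> a; rewrite mem_iota => Ha [-> -> -> ->]; lia.
- move=> H; exists i; first by rewrite mem_iota; lia.
  by move: H => /and4P [/eqP -> _ /eqP -> /eqP ->].
Qed.

Lemma mem_H2 m d i j k :
  ((d, i, j, k) \in H2 m) = [&& d == 2, i < j, j < m & k == 0].
Proof.
elim: m => [|m IH] /=; first by rewrite in_nil; lia.
rewrite mem_cat IH; apply/orP/idP.
- case=> [H|/mapP [a]]; first by lia.
  by rewrite mem_iota => Ha [-> -> -> ->]; lia.
- move=> H; case: (ltnP j m) => Hj; first by left; lia.
  right; apply/mapP; exists i; first by rewrite mem_iota; lia.
  have -> : j = m by lia.
  by move: H => /and4P [/eqP -> _ _ /eqP ->].
Qed.

Lemma mem_Tri m i j : ((i, j) \in Tri m) = (j <= i < m).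
Proof.
elim: m => [|m IH] /=; first by rewrite in_nil; lia.
rewrite mem_cat IH /trow; apply/orP/idP.
- case=> [H|/mapP [a]]; first by lia.
  by rewrite mem_iota => Ha [-> ->]; lia.
- move=> H; case: (ltnP i m) => Hi; first by left; lia.
  right; apply/mapP; exists j; first by rewrite mem_iota; lia.
  by have -> : i = m by lia.
Qed.

Lemma mem_H3 m d i j k :
  ((d, i, j, k) \in H3 m) = [&& d == 3, j < k, j <= i, i < m & k < m].
Proof.
elim: m => [|m IH] /=; first by rewrite in_nil; lia.
rewrite mem_cat IH /new3 !mem_cat; apply/orP/idP.
- case=> [H|]; first by lia.
  case/orP; first by case/mapP => a; rewrite mem_iota => Ha [-> -> -> ->]; lia.
  case/orP; first by case/mapP => -[a b]; rewrite mem_Tri => Ha [-> -> -> ->]; lia.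
  by case/mapP => -[[[d' a] b] c]; rewrite mem_H2 => Ha [-> -> -> ->]; lia.
- move=> H; case: (ltnP i m) => Hi; case: (ltnP k m) => Hk.
  + by left; lia.
  + right; apply/orP; right; apply/orP; left; apply/mapP; exists (i, j).
      by rewrite mem_Tri; lia.
    have -> : k = m by lia.
    by move: H => /and5P [/eqP -> _ _ _ _].
  + right; apply/orP; right; apply/orP; right; apply/mapP; exists (2, j, k, 0).
      by rewrite mem_H2; lia.
    have -> : i = m by lia.
    by move: H => /and5P [/eqP -> _ _ _ _].
  + right; apply/orP; left; apply/mapP; exists j.
      by rewrite mem_iota; lia.
    have -> : i = m by lia.
    have -> : k = m by lia.
    by move: H => /and5P [/eqP -> _ _ _ _].
Qed.

Lemma size_H2 m : size (H2 m) = 'C(m, 2).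
Proof.
elim: m => [|m IH] //=; by rewrite size_cat IH size_map size_iota binS bin1.
Qed.

Lemma size_Tri m : size (Tri m) = 'C(m.+1, 2).
Proof.
elim: m => [|m IH] //=; by rewrite size_cat IH /trow size_map size_iota [in RHS]binS bin1.
Qed.

Lemma bin2_mul m : 'C(m, 2) * 2 = m * m.-1.
Proof.
elim: m => [|m IH] //; rewrite binS bin1 mulnDl IH; case: m {IH} => //= m; nia.
Qed.

Lemma size_H3 m : 3 * size (H3 m) + m = m ^ 3.
Proof.
elim: m => [|m IH] //=.
rewrite size_cat /new3 !size_cat !size_map size_iota size_Tri size_H2.
have h1 := bin2_mul m; have h2 := bin2_mul m.+1; simpl in h2.
nia.
Qed.

Lemma uniq_H1 g : uniq (H1 g).
Proof. by rewrite map_inj_uniq ?iota_uniq // => a b [->]. Qed.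

Lemma uniq_H2 m : uniq (H2 m).
Proof.
elim: m => [|m IH] //=; rewrite cat_uniq IH map_inj_uniq ?iota_uniq;
  last by move=> a b [->].
rewrite andbT /=; apply/hasPn => t /mapP [a _ ->]; rewrite mem_H2; lia.
Qed.

Lemma uniq_Tri m : uniq (Tri m).
Proof.
elim: m => [|m IH] //=; rewrite cat_uniq IH /trow map_inj_uniq ?iota_uniq;
  last by move=> a b [->].
rewrite andbT andTb; apply/hasPn => t /mapP [a _ ->]; rewrite mem_Tri; lia.
Qed.

Lemma uniq_H3 m : uniq (H3 m).
Proof.
elim: m => [|m IH] //=; rewrite cat_uniq IH /=.
apply/andP; split.
  apply/hasPn => t; rewrite /new3 !mem_cat => /orP
    [/mapP [a _ ->]|/orP [/mapP [[a b] _ ->]|/mapP [[[[d a] b] c] _ ->]]];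
    rewrite mem_H3 /=; lia.
rewrite /new3 !cat_uniq.
rewrite map_inj_uniq ?iota_uniq; last by move=> a b [->].
rewrite map_inj_uniq ?uniq_Tri; last by move=> [a b] [c e] /= [-> ->].
rewrite map_inj_in_uniq ?uniq_H2; last first.
  move=> [[[d a] b] c] [[[d' a'] b'] c']; rewrite !mem_H2 => H H' [-> ->].
  by move: H H' => /and4P[/eqP -> _ _ /eqP ->] /and4P[/eqP -> _ _ /eqP ->].
rewrite /= andbT; apply/andP; split.
  apply/hasPn => t; rewrite mem_cat => /orP
    [/mapP [[a b] Hm ->]|/mapP [[[[d a] b] c] Hm ->]].
    by rewrite mem_Tri in Hm; apply/mapP => -[j _ [] /=]; lia.
  by rewrite mem_H2 in Hm; apply/mapP => -[j _ [] /=]; lia.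
apply/hasPn => t /mapP [[[[d a] b] c] Hm ->]; rewrite mem_H2 in Hm.
by apply/mapP => -[[j j'] _ [] /=]; lia.
Qed.

Local Open Scope ring_scope.

Definition mklin {K : fieldType} {aT rT : lmodType K} {f : aT -> rT} (H : linear f)
  : {linear aT -> rT} := HB.pack f (GRing.isLinear.Build K aT rT *:%R f H).

Lemma linfunE (K : fieldType) (aT rT : vectType K) (f : aT -> rT) (H : linear f) :
  linfun f =1 f.
Proof. move=> v; exact: (lfunE (mklin (f:=f) H) v). Qed.

Section LinBasics.
Variables (K : fieldType) (U V : lmodType K) (f : U -> V) (Hf : linear f).
Lemma lin0 : f 0 = 0. Proof. exact: (raddf0 (mklin Hf)). Qed.
Lemma linD u v : f (u + v) = f u + f v. Proof. exact: (raddfD (mklin Hf)). Qed.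
Lemma linN u : f (- u) = - f u. Proof. exact: (raddfN (mklin Hf)). Qed.
Lemma linB u v : f (u - v) = f u - f v. Proof. exact: (raddfB (mklin Hf)). Qed.
Lemma linZ a u : f (a *: u) = a *: f u. Proof. by rewrite -[a *: u]addr0 Hf lin0 addr0. Qed.
Lemma lin_sum I (r : seq I) (P : pred I) (F : I -> U) :
  f (\sum_(i <- r | P i) F i) = \sum_(i <- r | P i) f (F i).
Proof. exact: (raddf_sum (mklin Hf)). Qed.
End LinBasics.

Section LieBasics.
Variables (K : fieldType) (M : lmodType K) (br : M -> M -> M) (HL : is_lie br).

Lemma brl_lin z : linear (br^~ z).
Proof. by case: HL => H _ _ _ a u v; apply: H. Qed.
Lemma brr_lin z : linear (br z).
Proof. by case: HL => _ H _ _ a u v; apply: H. Qed.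
Lemma br_alt u : br u u = 0. Proof. by case: HL. Qed.
Lemma br_jac u v w : br u (br v w) + br v (br w u) + br w (br u v) = 0.
Proof. by case: HL. Qed.

Lemma br0l z : br 0 z = 0. Proof. exact: (lin0 (brl_lin z)). Qed.
Lemma br0r z : br z 0 = 0. Proof. exact: (lin0 (brr_lin z)). Qed.
Lemma brDl u v z : br (u + v) z = br u z + br v z. Proof. exact: (linD (brl_lin z)). Qed.
Lemma brDr u v z : br z (u + v) = br z u + br z v. Proof. exact: (linD (brr_lin z)). Qed.
Lemma brNl u z : br (- u) z = - br u z. Proof. exact: (linN (brl_lin z)). Qed.
Lemma brNr u z : br z (- u) = - br z u. Proof. exact: (linN (brr_lin z)). Qed.
Lemma brBl u v z : br (u - v) z = br u z - br v z. Proof. exact: (linB (brl_lin z)). Qed.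
Lemma brBr u v z : br z (u - v) = br z u - br z v. Proof. exact: (linB (brr_lin z)). Qed.
Lemma brZl a u z : br (a *: u) z = a *: br u z. Proof. exact: (linZ (brl_lin z)). Qed.
Lemma brZr a u z : br z (a *: u) = a *: br z u. Proof. exact: (linZ (brr_lin z)). Qed.

Lemma brC u v : br u v = - br v u.
Proof.
have := br_alt (u + v); rewrite brDl !brDr !br_alt add0r addr0 => /eqP.
by rewrite addr_eq0 => /eqP.
Qed.

Lemma jacobi_alt u v w : br u (br v w) = br v (br u w) - br w (br u v).
Proof.
have J := br_jac u v w; rewrite (brC w u) brNr in J.
move/eqP: J; rewrite -addrA addr_eq0 => /eqP ->.
by rewrite opprD opprK.
Qed.

Hypothesis HN : nilp3 br.
Lemma br_brbr a b c d : br (br a b) (br c d) = 0.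
Proof.
have := br_jac c d (br a b).
by rewrite [br (br a b) c]brC brNr !HN oppr0 !add0r.
Qed.
Lemma br3l a b c y : br (br a (br b c)) y = 0.
Proof. by rewrite brC HN oppr0. Qed.
End LieBasics.

Section NAlg.
Variable K : fieldType.
Definition N := (K^o * K^o * K^o * K^o * K^o * K^o)%type.
Definition c12 (v : N) : K := v.1.1.1.1.1.
Definition c23 (v : N) : K := v.1.1.1.1.2.
Definition c34 (v : N) : K := v.1.1.1.2.
Definition c13 (v : N) : K := v.1.1.2.
Definition c24 (v : N) : K := v.1.2.
Definition c14 (v : N) : K := v.2.
Definition brN (u v : N) : N :=
  (0, 0, 0, c12 u * c23 v - c23 u * c12 v, c23 u * c34 v - c34 u * c23 v,
   c12 u * c24 v - c24 u * c12 v + c13 u * c34 v - c34 u * c13 v).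

Lemma scale_pair (A B : lmodType K) (a : K) (u : A) (v : B) :
  a *: ((u, v) : (A * B)%type) = (a *: u, a *: v).
Proof. by []. Qed.
Lemma scaleKo (a x : K) : a *: (x : K^o) = a * x. Proof. by []. Qed.
Lemma add_pair (A B : lmodType K) (u u' : A) (v v' : B) :
  ((u, v) : (A * B)%type) + (u', v') = (u + u', v + v').
Proof. by []. Qed.

Lemma brN_lie : is_lie brN.
Proof.
split.
- move=> a [[[[[x1 x2] x3] x4] x5] x6] [[[[[y1 y2] y3] y4] y5] y6]
    [[[[[z1 z2] z3] z4] z5] z6].
  rewrite /brN /c12 /c23 /c34 /c13 /c24 /c14 !scale_pair !add_pair /= !scaleKo.
  congr (_, _, _, _, _, _); ring.
- move=> a [[[[[x1 x2] x3] x4] x5] x6] [[[[[y1 y2] y3] y4] y5] y6]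
    [[[[[z1 z2] z3] z4] z5] z6].
  rewrite /brN /c12 /c23 /c34 /c13 /c24 /c14 !scale_pair !add_pair /= !scaleKo.
  congr (_, _, _, _, _, _); ring.
- move=> [[[[[x1 x2] x3] x4] x5] x6].
  rewrite /brN /c12 /c23 /c34 /c13 /c24 /c14 /=.
  congr (_, _, _, _, _, _); ring.
- move=> [[[[[x1 x2] x3] x4] x5] x6] [[[[[y1 y2] y3] y4] y5] y6]
    [[[[[z1 z2] z3] z4] z5] z6].
  rewrite /brN /c12 /c23 /c34 /c13 /c24 /c14 !add_pair /=.
  congr (_, _, _, _, _, _); ring.
Qed.

Lemma brN_nil : nilp3 brN.
Proof.
move=> [[[[[x1 x2] x3] x4] x5] x6] [[[[[y1 y2] y3] y4] y5] y6]
    [[[[[z1 z2] z3] z4] z5] z6] [[[[[w1 w2] w3] w4] w5] w6].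
rewrite /brN /c12 /c23 /c34 /c13 /c24 /c14 /=.
congr (_, _, _, _, _, _); ring.
Qed.
End NAlg.

Definition hvG (K : fieldType) (M : lmodType K) (brM : M -> M -> M) (Y : nat -> M)
  (t : lab) : M :=
  let: (d, i, j, k) := t in
  if d == 1%N then Y i else if d == 2%N then brM (Y i) (Y j)
  else if d == 3%N then brM (Y i) (brM (Y j) (Y k)) else 0.

Lemma hom_hvG (K : fieldType) (M M' : lmodType K) (brM : M -> M -> M)
  (brM' : M' -> M' -> M') (f : M -> M') (Y : nat -> M) (Y' : nat -> M') t :
  lie_hom brM brM' f -> (forall n, f (Y n) = Y' n) ->
  f (hvG brM Y t) = hvG brM' Y' t.
Proof.
move=> [Hl Hb] HY; case: t => [[[d i] j] k] /=.
case: ifP => _; first exact: HY.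
case: ifP => _; first by rewrite Hb !HY.
case: ifP => _; first by rewrite !Hb !HY.
exact: (lin0 Hl).
Qed.

Section Coords.
Variable K : fieldType.
Definition genN (a b c : nat -> K) (n : nat) : N K := (a n, b n, c n, 0, 0, 0).

Lemma c12_hv a b c d i j k :
  c12 (hvG (@brN K) (genN a b c) (d, i, j, k)) = if d == 1%N then a i else 0.
Proof. by rewrite /hvG; do 3 case: ifP => _ //. Qed.

Lemma c13_hv a b c d i j k :
  c13 (hvG (@brN K) (genN a b c) (d, i, j, k)) =
  if d == 1%N then 0 else if d == 2%N then a i * b j - b i * a j else 0.
Proof. by rewrite /hvG; do 3 case: ifP => _ //=; rewrite /c13 /= ?mulr0 ?mul0r ?subrr. Qed.

Lemma c14_hv a b c d i j k :
  c14 (hvG (@brN K) (genN a b c) (d, i, j, k)) =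
  if d == 3%N then a i * (b j * c k - c j * b k) - c i * (a j * b k - b j * a k)
  else 0.
Proof.
case: d => [|[|[|[|d]]]] //=;
  rewrite /c14 /brN /genN /c12 /c13 /c24 /c34 /c23 /= ?(mulr0, mul0r, subr0, addr0, sub0r, oppr0) //; ring.
Qed.
Lemma c12g a b c n : c12 (genN a b c n) = a n. Proof. by []. Qed.
Lemma c23g a b c n : c23 (genN a b c n) = b n. Proof. by []. Qed.
Lemma c34g a b c n : c34 (genN a b c n) = c n. Proof. by []. Qed.
Lemma c13g a b c n : c13 (genN a b c n) = 0. Proof. by []. Qed.
Lemma c24g a b c n : c24 (genN a b c n) = 0. Proof. by []. Qed.
Lemma c14g a b c n : c14 (genN a b c n) = 0. Proof. by []. Qed.
Lemma c12b (u v : N K) : c12 (brN u v) = 0. Proof. by []. Qed.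
Lemma c23b (u v : N K) : c23 (brN u v) = 0. Proof. by []. Qed.
Lemma c34b (u v : N K) : c34 (brN u v) = 0. Proof. by []. Qed.
Lemma c13b (u v : N K) : c13 (brN u v) = c12 u * c23 v - c23 u * c12 v. Proof. by []. Qed.
Lemma c24b (u v : N K) : c24 (brN u v) = c23 u * c34 v - c34 u * c23 v. Proof. by []. Qed.
Lemma c14b (u v : N K) : c14 (brN u v) =
  c12 u * c24 v - c24 u * c12 v + c13 u * c34 v - c34 u * c13 v. Proof. by []. Qed.
Definition cNE := (c12g, c23g, c34g, c13g, c24g, c14g, c12b, c23b, c34b, c13b, c24b, c14b).
End Coords.

Definition Hall g : seq lab := H1 g ++ H2 g ++ H3 g.

Lemma mem_Hall g d i j k : ((d, i, j, k) \in Hall g) =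
  ([|| [&& d == 1, i < g, j == 0 & k == 0],
      [&& d == 2, i < j, j < g & k == 0] |
      [&& d == 3, j < k, j <= i, i < g & k < g]])%N.
Proof. by rewrite /Hall !mem_cat mem_H1 mem_H2 mem_H3. Qed.

Arguments hvG : simpl never.

Section Delta.
Variables (K : fieldType) (g : nat).
Definition e (a n : nat) : K := (n == a)%:R.
Definition third (p q : nat) : nat :=
  if (p != 0%N) && (q != 0%N) then 0%N else if (p != 1%N) && (q != 1%N) then 1%N else 2%N.
Definition ia (t : lab) : nat := let: (d, p, q, r) := t in
  if d == 1%N then p else if d == 2%N then p else
  if p == q then p else if p == r then r else if (p < r)%N then p else q.
Definition ib (t : lab) : nat := let: (d, p, q, r) := t in
  if d == 1%N then (if p == 0%N then 1%N else 0%N) else if d == 2%N then q else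
  if p == q then r else if p == r then q else r.
Definition ic (t : lab) : nat := let: (d, p, q, r) := t in
  if d == 1%N then g else if d == 2%N then third p q else
  if p == q then p else if p == r then r else if (p < r)%N then q else p.
Definition gens (t : lab) : nat -> N K := genN (e (ia t)) (e (ib t)) (e (ic t)).
Definition crd (t : lab) : N K -> K := let: (d, p, q, r) := t in
  if d == 1%N then @c12 K else if d == 2%N then @c13 K else @c14 K.
Definition kap (t : lab) : K := let: (d, p, q, r) := t in
  if d == 3%N then (if p == q then - 2%:R else if p == r then 2%:R else -1) else 1.

Ltac crush :=
  repeat (match goal with
  | |- context [?a == ?b] => case: (a =P b) => ?
  | |- context [(?a < ?b)%N] => case: (ltnP a b) => ?
  end; try subst; try (exfalso; lia)); rewrite /= ?(mulr0, mul0r, subr0, addr0, sub0r, oppr0, mulr1, mul1r).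

Definition V (a b c : nat -> K) (i j k : nat) : K :=
  a i * (b j * c k - c j * b k) - c i * (a j * b k - b j * a k).

Lemma V_a i j k p r : (p < r)%N -> (j < k)%N -> (j <= i)%N ->
  V (e p) (e r) (e p) i j k = - 2%:R * ((i == p) && (j == p) && (k == r))%:R.
Proof. move=> *; rewrite /V /e; crush; ring. Qed.
Lemma V_b i j k q r : (q < r)%N -> (j < k)%N -> (j <= i)%N ->
  V (e r) (e q) (e r) i j k = 2%:R * ((i == r) && (j == q) && (k == r))%:R.
Proof. move=> *; rewrite /V /e; crush; ring. Qed.
Lemma V_c i j k p q r : (q < p < r)%N -> (j < k)%N -> (j <= i)%N ->
  V (e p) (e r) (e q) i j k = - ((i == p) && (j == q) && (k == r))%:R.
Proof. move=> *; rewrite /V /e; crush; ring. Qed.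
Lemma V_d i j k p q r : (q < r < p)%N -> (j < k)%N -> (j <= i)%N ->
  V (e q) (e r) (e p) i j k = - ((i == p) && (j == q) && (k == r))%:R.
Proof. move=> *; rewrite /V /e; crush; ring. Qed.

Lemma delta s t : s \in Hall g -> t \in Hall g ->
  crd t (hvG (@brN K) (gens t) s) = (s == t)%:R * kap t.
Proof.
case: s => [[[d i] j] k]; case: t => [[[d' p] q] r].
rewrite !mem_Hall !xpair_eqE.
case/or3P => [/and4P [/eqP -> Hi /eqP -> /eqP ->]|/and4P [/eqP -> Hij Hj /eqP ->]|
  /and5P [/eqP -> Hjk Hji Hi Hk]];
case/or3P => [/and4P [/eqP -> Hp /eqP -> /eqP ->]|/and4P [/eqP -> Hpq Hq /eqP ->]|
  /and5P [/eqP -> Hqr Hqp Hp Hr]];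
rewrite /crd /kap /gens /hvG /= ?cNE /e /= ?mulr1 ?mul0r //.
- by crush.
- by crush.
- by crush.
- by rewrite !mulr0 subrr.
have E : forall a b c : nat,
  (i == a)%:R * ((j == b)%:R * (k == c)%:R - (j == c)%:R * (k == b)%:R) - 0 + 0 -
  (i == c)%:R * ((j == a)%:R * (k == b)%:R - (j == b)%:R * (k == a)%:R)
  = V (e a) (e b) (e c) i j k by move=> a b c; rewrite /V /e subr0 addr0.
rewrite E; case: (p =P q) => [E1|ne1].
  by rewrite -E1 (V_a (p:=p) (r:=r)); [rewrite mulrC|lia|lia|lia].
case: (p =P r) => [E2|ne2].
  by rewrite -E2 (V_b (q:=q) (r:=p)); [rewrite mulrC|lia|lia|lia].
case: (ltnP p r) => h.
  by rewrite (V_c (p:=p) (q:=q) (r:=r)); [rewrite mulrN1|lia|lia|lia].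
by rewrite (V_d (p:=p) (q:=q) (r:=r)); [rewrite mulrN1|lia|lia|lia].
Qed.
End Delta.

Section SpanGen.
Variables (K : fieldType) (L : vectType K).

Lemma span_lin (M : vectType K) (f : L -> M) (Hf : linear f) (S : {vspace M})
  (Y : seq L) : (forall y, y \in Y -> f y \in S) -> forall v, v \in <<Y>>%VS -> f v \in S.
Proof.
move=> HY v; rewrite -[Y]in_tupleE => /coord_span ->.
rewrite (lin_sum Hf); apply: memv_suml => i _; rewrite (linZ Hf).
by apply: memvZ; apply: HY; exact: (mem_nth 0 (ltn_ord i)).
Qed.

Lemma span_zero (M : vectType K) (f : L -> M) (Hf : linear f) (Y : seq L) :
  (forall y, y \in Y -> f y = 0) -> forall v, v \in <<Y>>%VS -> f v = 0.
Proof.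
move=> HY v Hv; apply/eqP; rewrite -memv0; apply: (span_lin Hf) Hv => y /HY ->.
exact: mem0v.
Qed.

Lemma dual_free (Y : seq L) (f : nat -> L -> K^o) (Hf : forall p, linear (f p)) :
  (forall p q, (p < size Y)%N -> (q < size Y)%N -> f p (Y`_q) = (p == q)%:R) ->
  free Y /\ (forall v, v \in <<Y>>%VS -> (forall p, (p < size Y)%N -> f p v = 0) -> v = 0).
Proof.
move=> Hd; have key : forall (k : 'I_(size Y) -> K) (p : 'I_(size Y)),
    f p (\sum_(i < size Y) k i *: Y`_i) = k p.
  move=> k p; rewrite (lin_sum (Hf p)) (bigD1 p) //= big1 => [|i /negbTE ne].
    by rewrite (linZ (Hf p)) Hd // eqxx /GRing.scale /= mulr1 addr0.
  rewrite (linZ (Hf p)) Hd //; case: eqP => [/val_inj E|_]; last by rewrite /GRing.scale /= mulr0.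
  by rewrite E eqxx in ne.
split.
  rewrite -[Y]in_tupleE; apply/freeP => k Hk i.
  move: Hk; rewrite in_tupleE => Hk.
  by rewrite -(key k i) Hk (lin0 (Hf i)).
move=> v; rewrite -[Y]in_tupleE => /coord_span -> H0.
apply: big1 => i _; have := key (fun j => coord (in_tuple Y) j v) i.
by rewrite H0 // => <-; rewrite scale0r.
Qed.
End SpanGen.

Section Main.
Variables (K : fieldType) (L : vectType K) (br : L -> L -> L) (gp : nat)
  (x : 'I_gp.+1 -> L).
Local Notation g := gp.+1.
Hypothesis Hfr : free_nilp3 br x.

Lemma HL : is_lie br. Proof. by case: Hfr. Qed.
Lemma HN : nilp3 br. Proof. by case: Hfr. Qed.

Definition X (n : nat) : L := x (inord n).
Definition hv := hvG br X.
Definition HS := map hv (Hall g).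

Lemma hv1 i : hv (1, i, 0, 0)%N = X i. Proof. by []. Qed.
Lemma hv2 i j : hv (2, i, j, 0)%N = br (X i) (X j). Proof. by []. Qed.
Lemma hv3 i j k : hv (3, i, j, k)%N = br (X i) (br (X j) (X k)). Proof. by []. Qed.

Lemma memHS s : s \in Hall g -> hv s \in <<HS>>%VS.
Proof. by move=> Hs; apply: memv_span; apply: map_f. Qed.

Lemma inHall3 i j k : (j < k)%N -> (j <= i)%N -> (i < g)%N -> (k < g)%N ->
  br (X i) (br (X j) (X k)) \in <<HS>>%VS.
Proof. by move=> *; rewrite -hv3; apply: memHS; rewrite mem_Hall; lia. Qed.

Lemma inHall2 i j : (i < g)%N -> (j < g)%N -> br (X i) (X j) \in <<HS>>%VS.
Proof.
move=> Hi Hj; case: (ltngtP i j) => h.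
- by rewrite -hv2; apply: memHS; rewrite mem_Hall; lia.
- by rewrite (brC HL) memvN -hv2; apply: memHS; rewrite mem_Hall; lia.
- by rewrite h (br_alt HL) mem0v.
Qed.

Lemma br12_in i a b : (i < g)%N -> (a < b)%N -> (b < g)%N ->
  br (X i) (br (X a) (X b)) \in <<HS>>%VS.
Proof.
move=> Hi Hab Hb; case: (leqP a i) => h; first by apply: inHall3; lia.
rewrite (jacobi_alt HL); apply: memvB; apply: inHall3; lia.
Qed.

Lemma br_hv_in s t : s \in Hall g -> t \in Hall g -> br (hv s) (hv t) \in <<HS>>%VS.
Proof.
case: s => [[[d i] j] k]; case: t => [[[d' p] q] r]; rewrite !mem_Hall.
case/or3P => [/and4P [/eqP -> Hi /eqP -> /eqP ->]|/and4P [/eqP -> Hij Hj /eqP ->]|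
  /and5P [/eqP -> Hjk Hji Hi Hk]];
case/or3P => [/and4P [/eqP -> Hp /eqP -> /eqP ->]|/and4P [/eqP -> Hpq Hq /eqP ->]|
  /and5P [/eqP -> Hqr Hqp Hp Hr]];
rewrite ?hv1 ?hv2 ?hv3.
- exact: inHall2.
- by apply: br12_in; lia.
- by rewrite HN mem0v.
- by rewrite (brC HL) memvN; apply: br12_in; lia.
- by rewrite (br_brbr HL HN) mem0v.
- by rewrite (br_brbr HL HN) mem0v.
- by rewrite (br3l HL HN) mem0v.
- by rewrite (br3l HL HN) mem0v.
- by rewrite (br3l HL HN) mem0v.
Qed.

Lemma br_closed u v : u \in <<HS>>%VS -> v \in <<HS>>%VS -> br u v \in <<HS>>%VS.
Proof.
move=> Hu Hv.
have H1 : forall s, s \in Hall g -> br (hv s) v \in <<HS>>%VS.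
  move=> s Hs; apply: (span_lin (brr_lin HL (hv s))) Hv => y /mapP [t Ht ->].
  exact: br_hv_in.
apply: (span_lin (brl_lin HL v)) Hu => y /mapP [t Ht ->]; exact: H1.
Qed.

Definition brS (u v : subvs_of <<HS>>%VS) : subvs_of <<HS>>%VS :=
  vsproj <<HS>>%VS (br (vsval u) (vsval v)).
Lemma brS_val u v : vsval (brS u v) = br (vsval u) (vsval v).
Proof. by rewrite vsprojK //; apply: br_closed; apply: subvsP. Qed.

Let vsinj := can_inj (@vsvalK _ _ <<HS>>%VS).
Let vslin := @vsval_is_linear _ _ <<HS>>%VS.

Lemma brS_lie : is_lie brS.
Proof.
split.
- move=> a u v w; apply: vsinj; rewrite brS_val vslin vslin !brS_val.
  exact: (brl_lin HL).
- move=> a u v w; apply: vsinj; rewrite brS_val vslin vslin !brS_val.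
  exact: (brr_lin HL).
- by move=> u; apply: vsinj; rewrite brS_val (br_alt HL) (lin0 vslin).
- move=> u v w; apply: vsinj; rewrite !(linD vslin) !brS_val (lin0 vslin).
  exact: (br_jac HL).
Qed.

Lemma brS_nil : nilp3 brS.
Proof. by move=> a b c d; apply: vsinj; rewrite !brS_val HN (lin0 vslin). Qed.

Lemma X_in i : (i < g)%N -> X i \in <<HS>>%VS.
Proof. by move=> Hi; rewrite -hv1; apply: memHS; rewrite mem_Hall; lia. Qed.

Lemma all_in v : v \in <<HS>>%VS.
Proof.
case: Hfr => _ _ /(_ _ brS (fun i => vsproj <<HS>>%VS (x i)) brS_lie brS_nil).
case=> [[f [[Hfl Hfb] Hfx]] Huniq].
have Hid : lie_hom br br id by split.
have Hvf : lie_hom br br (vsval \o f).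
  split; first by move=> a u w /=; rewrite Hfl vslin.
  by move=> a b /=; rewrite Hfb brS_val.
have Hgen : forall i, (vsval \o f) (x i) = x i.
  move=> i /=; rewrite Hfx vsprojK //.
  by have := X_in (ltn_ord i); rewrite /X inord_val.
have := Hfx; case: Hfr => _ _ /(_ _ br x HL HN) [_ /(_ _ _ Hvf Hgen Hid (fun i => erefl))].
by move=> /(_ v) /= <- _; apply: subvsP.
Qed.

Lemma homN_ex (m : 'I_g -> N K) :
  exists f : L -> N K, lie_hom br (@brN K) f /\ forall i, f (x i) = m i.
Proof. by case: Hfr => _ _ /(_ _ (@brN K) m (@brN_lie K) (@brN_nil K)) []. Qed.
Definition homN m := proj1_sig (constructive_indefinite_description _ (homN_ex m)).
Lemma homN_spec m : lie_hom br (@brN K) (homN m) /\ forall i, homN m (x i) = m i.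
Proof. exact: (proj2_sig (constructive_indefinite_description _ (homN_ex m))). Qed.

Definition phiT (t : lab) := homN (fun i : 'I_g => gens K g t (val i)).

Lemma hvG_ext (M : lmodType K) (brM : M -> M -> M) (Y Y' : nat -> M) s :
  s \in Hall g -> (forall n, (n < g)%N -> Y n = Y' n) -> hvG brM Y s = hvG brM Y' s.
Proof.
case: s => [[[d i] j] k]; rewrite mem_Hall => Hs HY; rewrite /hvG.
case: ifP => [/eqP Hd|_]; first by apply: HY; lia.
case: ifP => [/eqP Hd|_]; first by rewrite !HY //; lia.
case: ifP => [/eqP Hd|_] //; by rewrite !HY //; lia.
Qed.

Lemma phiT_X t n : (n < g)%N -> phiT t (X n) = gens K g t n.
Proof. by move=> Hn; rewrite /X /phiT (proj2 (homN_spec _)) /= inordK. Qed.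

Lemma phiT_hv t s : s \in Hall g -> phiT t (hv s) = hvG (@brN K) (gens K g t) s.
Proof.
move=> Hs; rewrite /hv (hom_hvG (brM' := @brN K) (Y' := fun n => phiT t (X n))) //;
  last exact: (proj1 (homN_spec _)).
by apply: hvG_ext => // n Hn; rewrite phiT_X.
Qed.

Lemma phiT_br t a b : phiT t (br a b) = brN (phiT t a) (phiT t b).
Proof. exact: (proj2 (proj1 (homN_spec _))). Qed.
Lemma phiT_0 t : phiT t 0 = 0.
Proof. exact: (lin0 (proj1 (proj1 (homN_spec _)))). Qed.

Lemma crd_lin t : linear (crd t : N K -> K^o).
Proof.
case: t => [[[d p] q] r] a u v; rewrite /crd.
by case: ifP => _; [|case: ifP => _].
Qed.

Definition fT (t : lab) (v : L) : K^o := (kap K t)^-1 * crd t (phiT t v).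

Lemma fT_lin t : linear (fT t).
Proof.
move=> a u v; rewrite /fT /phiT (proj1 (proj1 (homN_spec _))) (crd_lin t).
by rewrite /GRing.scale /= mulrDr mulrCA.
Qed.

Hypothesis char0 : [pchar K] =i pred0.
Hypothesis g3 : (3 <= g)%N.

Lemma kap_neq0 t : kap K t != 0.
Proof.
have h2 : (2%:R : K) != 0 by rewrite (proj1 (pcharf0P K) char0).
case: t => [[[d p] q] r]; rewrite /kap.
case: ifP => _; last exact: oner_neq0.
case: ifP => _; first by rewrite oppr_eq0.
case: ifP => _ //; by rewrite oppr_eq0 oner_neq0.
Qed.

Lemma fT_delta s t : s \in Hall g -> t \in Hall g -> fT t (hv s) = (s == t)%:R.
Proof.
move=> Hs Ht; rewrite /fT phiT_hv // delta // mulrC -mulrA mulfV ?mulr1 //.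
exact: kap_neq0.
Qed.

Lemma sub_free (labs : seq lab) : uniq labs -> {subset labs <= Hall g} ->
  free (map hv labs) /\ (forall v, v \in <<map hv labs>>%VS ->
    (forall t, t \in labs -> fT t v = 0) -> v = 0).
Proof.
move=> Hu Hsub; pose f p := fT (nth (0,0,0,0)%N labs p).
have [H1 H2] : free (map hv labs) /\ (forall v, v \in <<map hv labs>>%VS ->
    (forall p, (p < size (map hv labs))%N -> f p v = 0) -> v = 0).
  apply: dual_free => [p|p q]; first exact: fT_lin.
  rewrite size_map => Hp Hq; rewrite (nth_map (0,0,0,0)%N) // /f fT_delta;
    try by apply: Hsub; apply: mem_nth.
  by rewrite nth_uniq // eq_sym.
split=> // v Hv H0; apply: H2 => // p; rewrite size_map => Hp; apply: H0.
exact: mem_nth.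
Qed.

Lemma uniq_Hall : uniq (Hall g).
Proof.
rewrite /Hall cat_uniq uniq_H1 cat_uniq uniq_H2 uniq_H3 !andbT !andTb.
apply/andP; split.
  apply/hasPn => -[[[d i] j] k]; rewrite mem_cat mem_H2 mem_H3 mem_H1; lia.
apply/hasPn => -[[[d i] j] k]; rewrite mem_H2 mem_H3; lia.
Qed.

Lemma free_HS : free HS.
Proof. by have [] := sub_free uniq_Hall (fun t (h : t \in Hall g) => h). Qed.

Lemma dimL : \dim (fullv : {vspace L}) = (g + 'C(g, 2) + size (H3 g))%N.
Proof.
have -> : (fullv : {vspace L}) = <<HS>>%VS.
  by apply/eqP; rewrite eqEsubv subvf andbT; apply/subvP => v _; apply: all_in.
rewrite (eqP free_HS) size_map /Hall (size_cat (H1 g)) (size_cat (H2 g)) (size_H2 g).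
rewrite size_map size_iota.
by rewrite addnA.
Qed.

Lemma outer_lin : linear (fun y : L => (linfun (fun z => br z y) : 'Hom(L, L))).
Proof.
move=> a u v; apply/lfunP => z.
rewrite add_lfunE scale_lfunE !(linfunE (brl_lin HL _)).
exact: (brr_lin HL).
Qed.

Lemma mem_center v : (v \in lie_center br) <-> (forall z, br z v = 0).
Proof.
rewrite /lie_center memv_ker (linfunE outer_lin); split.
  by move=> /eqP H z; rewrite -(linfunE (brl_lin HL v)) H zero_lfunE.
by move=> H; apply/eqP/lfunP => z; rewrite zero_lfunE (linfunE (brl_lin HL v)).
Qed.

Lemma third_ne p q : (p < q)%N -> (third p q != p) && (third p q != q) && (third p q < 3)%N.
Proof.
move=> *; rewrite /third; case: (p =P 0%N); case: (q =P 0%N); case: (p =P 1%N);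
  case: (q =P 1%N) => /= *; lia.
Qed.

Lemma fT_central t v : t \in H1 g ++ H2 g -> (forall z, br z v = 0) -> fT t v = 0.
Proof.
case: t => [[[d p] q] r]; rewrite mem_cat mem_H1 mem_H2 => Ht Hv.
case/orP: Ht => [/and4P [/eqP -> Hp /eqP -> /eqP ->]|/and4P [/eqP -> Hpq Hq /eqP ->]].
- pose b := if p == 0%N then 1%N else 0%N.
  have Hb : (b < g)%N by rewrite /b; case: ifP => _; lia.
  have := congr1 (phiT (1, p, 0, 0)%N) (Hv (X b)).
  rewrite phiT_br phiT_0 phiT_X // => /(congr1 (@c13 K)).
  rewrite c13b /gens /ia /ib /ic /= c12g c23g /e.
  have -> : (b == p) = false by rewrite /b; case: ifP; lia.
  rewrite eqxx /= mul0r sub0r mul1r => /eqP; rewrite oppr_eq0 => /eqP H.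
  by rewrite /fT /crd /= H mulr0.
- have /andP [/andP [H1 H2] H3] := third_ne Hpq.
  have Hc : (third p q < g)%N by lia.
  have := congr1 (phiT (2, p, q, 0)%N) (Hv (X (third p q))).
  rewrite phiT_br phiT_0 phiT_X // => /(congr1 (@c14 K)).
  rewrite c14b /gens /ia /ib /ic /= c12g c24g c13g c34g /e.
  rewrite (negbTE H1) eqxx /= !mul0r !subr0 addr0 sub0r mul1r.
  move=> /eqP; rewrite oppr_eq0 => /eqP H.
  by rewrite /fT /crd /= H mulr0.
Qed.

Lemma uniq_H12 : uniq (H1 g ++ H2 g).
Proof. by have := uniq_Hall; rewrite /Hall catA cat_uniq => /andP []. Qed.

Lemma HS_cat : HS = map hv (H1 g ++ H2 g) ++ map hv (H3 g).
Proof. by rewrite /HS /Hall catA map_cat. Qed.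

Lemma dim_center : \dim (lie_center br) = size (H3 g).
Proof.
have fr12 : free (map hv (H1 g ++ H2 g)) by have := free_HS; rewrite HS_cat => /catl_free.
have fr3 : free (map hv (H3 g)) by have := free_HS; rewrite HS_cat => /catr_free.
have Hsub : {subset H1 g ++ H2 g <= Hall g}.
  by move=> t Ht; rewrite /Hall catA mem_cat Ht.
have [_ Hdet] := sub_free uniq_H12 Hsub.
apply/eqP; rewrite eqn_leq; apply/andP; split; last first.
  rewrite -(size_map hv) -(eqP fr3); apply: dimvS; apply/span_subvP => y /mapP [t].
  case: t => [[[d i] j] k]; rewrite mem_H3 => /and5P [/eqP -> _ _ _ _] ->.
  by apply/mem_center => z; rewrite hv3 HN.
have Hcap : (lie_center br :&: <<map hv (H1 g ++ H2 g)>> = 0)%VS.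
  apply/eqP; rewrite -subv0; apply/subvP => v /memv_capP [Hz H12].
  rewrite memv0; apply/eqP; apply: Hdet => // t Ht.
  by apply: fT_central => //; apply/mem_center.
have := dimvS (subvf (lie_center br + <<map hv (H1 g ++ H2 g)>>)%VS).
rewrite dimv_disjoint_sum // dimL (eqP fr12) size_map size_cat size_map size_iota (size_H2 g).
lia.
Qed.

Section Stab.
Variable l : 'Hom(L, K^o).

Lemma stab_inner_lin v : linear (fun z => l (br z v)).
Proof. by move=> a u w; rewrite (brl_lin HL) linearP. Qed.

Lemma stab_outer_lin :
  linear (fun y : L => (linfun (fun z => l (br z y)) : 'Hom(L, K^o))).
Proof.
move=> a u v; apply/lfunP => z.
rewrite add_lfunE scale_lfunE !(linfunE (stab_inner_lin _)).
by rewrite (brr_lin HL) linearP.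
Qed.

Lemma mem_stab v : (v \in stab br l) <-> (forall z, l (br z v) = 0).
Proof.
rewrite /stab memv_ker (linfunE stab_outer_lin); split.
  by move=> /eqP H z; rewrite -(linfunE (stab_inner_lin v)) H zero_lfunE.
by move=> H; apply/eqP/lfunP => z; rewrite zero_lfunE (linfunE (stab_inner_lin v)).
Qed.
End Stab.

Definition W := <<map hv (H2 g ++ H3 g)>>%VS.

Lemma hv_isbr s : s \in H2 g ++ H3 g -> exists a b, hv s = br a b.
Proof.
case: s => [[[d i] j] k]; rewrite mem_cat mem_H2 mem_H3.
case/orP => [/and4P [/eqP -> _ _ /eqP ->]|/and5P [/eqP -> _ _ _ _]].
  by exists (X i), (X j).
by exists (X i), (br (X j) (X k)).
Qed.

Lemma WW w v : w \in W -> v \in W -> br w v = 0.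
Proof.
move=> Hw Hv.
have H1 : forall s, s \in H2 g ++ H3 g -> br (hv s) v = 0.
  move=> s Hs; apply: (span_zero (brr_lin HL (hv s))) Hv => y /mapP [t Ht ->].
  have [a [b ->]] := hv_isbr Hs; have [c [d ->]] := hv_isbr Ht.
  exact: (br_brbr HL HN).
apply: (span_zero (brl_lin HL v)) Hw => y /mapP [t Ht ->]; exact: H1.
Qed.

Lemma HS_cat2 : HS = map hv (H1 g) ++ map hv (H2 g ++ H3 g).
Proof. by rewrite /HS /Hall map_cat. Qed.

Lemma dimW : \dim W = ('C(g, 2) + size (H3 g))%N.
Proof.
have fr : free (map hv (H2 g ++ H3 g)) by have := free_HS; rewrite HS_cat2 => /catr_free.
by rewrite /W (eqP fr) size_map size_cat (size_H2 g).
Qed.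

Lemma stab_low l : (\dim (fullv : {vspace L}) <= \dim (stab br l) + 2 * g)%N.
Proof.
have Tl : linear (fun y : L => (\row_(i < g) l (br (x i) y) : 'rV[K]_g)).
  by move=> a u v; apply/rowP => i; rewrite !mxE (brr_lin HL) linearP.
pose T : 'Hom(L, 'rV[K]_g) := linfun (fun y : L => \row_(i < g) l (br (x i) y)).
have Hk := limg_ker_dim T W.
have Him : (\dim (T @: W) <= g)%N.
  by have := dimvS (subvf (T @: W)); rewrite dimvf /dim /= mul1n.
have Hsub : (W :&: lker T <= stab br l)%VS.
  apply/subvP => v /memv_capP [Hw Hker]; apply/mem_stab => z.
  have Hz : z \in (<<map hv (H1 g)>> + W)%VS by rewrite -span_cat -HS_cat2 all_in.
  have [z1 Hz1 [z2 Hz2 ->]] := memv_addP Hz.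
  rewrite (brDl HL) (WW Hz2 Hw) addr0.
  apply: (span_zero (stab_inner_lin l v)) Hz1 => y /mapP [t].
  case: t => [[[d i] j] k]; rewrite mem_H1 => /and4P [/eqP -> Hi /eqP -> /eqP ->] ->.
  rewrite hv1 /X; move: Hker; rewrite memv_ker (linfunE Tl) => /eqP /rowP /(_ (inord i)).
  by rewrite !mxE.
have := dimvS Hsub; have := dimW; rewrite dimL; lia.
Qed.

Definition lam (t : lab) : K^o := let: (d, i, j, k) := t in
  if [&& d == 3, j == 0 & 0 < k]%N then (i == (if k == 1%N then 0%N else k))%:R
  else if [&& d == 3, j == 1 & k == 2]%N then (i == 1%N)%:R else 0.

Definition u (m : nat) : L :=
  if m == 0%N then br (X 0) (X 1) else if m == 1%N then br (X 1) (X 2)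
  else br (X 0) (X m).

Lemma u_isbr m : exists a b, u m = br a b.
Proof. by rewrite /u; case: ifP => _; [|case: ifP => _]; eexists; eexists. Qed.

Lemma exists_l : exists l : 'Hom(L, K^o),
  (forall a b, (a < g)%N -> (b < g)%N -> l (br (X a) (X b)) = 0) /\
  (forall a m, (a < g)%N -> (m < g)%N -> l (br (X a) (u m)) = (a == m)%:R).
Proof.
have [f0 Hf0] := linear_of_free HS (map lam (Hall g)).
have Hf : forall s, s \in Hall g -> f0 (hv s) = lam s.
  move=> s Hs; have := Hf0 free_HS; rewrite !size_map => /(_ erefl).
  rewrite -map_comp => /eq_in_map /(_ s Hs); exact.
exists (linfun f0); split=> [a b Ha Hb|a m Ha Hm]; rewrite lfunE /=.
  case: (ltngtP a b) => h.
  - by rewrite -hv2 Hf // mem_Hall; lia.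
  - by rewrite (brC HL) linearN -hv2 Hf ?oppr0 // mem_Hall; lia.
  - by rewrite h (br_alt HL) linear0.
rewrite /u; case: (m =P 0%N) => [->|m0].
  rewrite -hv3 Hf ?mem_Hall /=; last by lia.
  by case: (a =P 0%N).
case: (m =P 1%N) => [->|m1].
  case: (a =P 0%N) => [->|a0].
    rewrite (jacobi_alt HL) linearB -!hv3 !Hf ?mem_Hall /=; try lia.
    by rewrite subrr.
  rewrite -hv3 Hf ?mem_Hall /=; last by lia.
  by case: (a =P 1%N) => //; lia.
rewrite -hv3 Hf ?mem_Hall /=; last by lia.
have -> : (0 < m)%N by lia.
by move/eqP/negbTE: m1 => ->.
Qed.

Lemma stab_up : exists l : 'Hom(L, K^o),
  (\dim (stab br l) + 2 * g <= \dim (fullv : {vspace L}))%N.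
Proof.
have [l [Hxx Hxu]] := exists_l.
exists l.
pose Y := map X (iota 0 g) ++ map u (iota 0 g).
have sY : size Y = (2 * g)%N by rewrite size_cat !size_map size_iota; lia.
have nY : forall q, (q < 2 * g)%N ->
    Y`_q = if (q < g)%N then X q else u (q - g).
  move=> q Hq; rewrite nth_cat size_map size_iota; case: ifP => h.
    by rewrite (nth_map 0%N) ?size_iota // nth_iota.
  rewrite (nth_map 0%N) ?size_iota; last lia.
  rewrite nth_iota ?add0n //; lia.
pose f (p : nat) (v : L) : K^o :=
  if (p < g)%N then - l (br (u p) v) else l (br (X (p - g)) v).
have Hfl : forall p, linear (f p).
  move=> p a v w; rewrite /f; case: ifP => _; rewrite (brr_lin HL) linearP //.
  by rewrite opprD /GRing.scale /= mulrN.
have [frY detY] : free Y /\ (forall v, v \in <<Y>>%VS ->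
    (forall p, (p < size Y)%N -> f p v = 0) -> v = 0).
  apply: dual_free => // p q; rewrite sY => Hp Hq; rewrite nY // /f.
  case: (ltnP p g) => hp; case: (ltnP q g) => hq /=.
  - by rewrite eq_sym (brC HL) linearN opprK; apply: Hxu.
  - have [a [b ->]] := u_isbr p; have [c [d ->]] := u_isbr (q - g).
    rewrite (br_brbr HL HN) linear0 oppr0.
    by have -> : (p == q) = false by apply/eqP; lia.
  - rewrite Hxx //; first (by have -> : (p == q) = false by apply/eqP; lia); lia.
  - rewrite Hxu; try lia; congr (_%:R); apply/eqP/eqP; lia.
have Hcap : (stab br l :&: <<Y>> = 0)%VS.
  apply/eqP; rewrite -subv0; apply/subvP => v /memv_capP [Hs HYv].
  rewrite memv0; apply/eqP; apply: detY => // p _; rewrite /f.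
  by have := (proj1 (mem_stab l v) Hs); case: ifP => _ H; rewrite H ?oppr0.
have := dimvS (subvf (stab br l + <<Y>>)%VS).
by rewrite dimv_disjoint_sum // (eqP frY) sY.
Qed.
End Main.

Unset Implicit Arguments.

Theorem theorem3p4 (K : fieldType) (g : nat) (L : vectType K)
  (br : L -> L -> L) (x : 'I_g -> L) :
  [pchar K] =i pred0 -> (3 <= g)%N -> free_nilp3 br x ->
  exists n : nat, lie_index br n /\
    [/\ (n + g = \dim (lie_center br) + 'C(g, 2))%N,
        (n + 2 * g = \dim (fullv : {vspace L}))%N &
        (6 * n + 11 * g = 2 * g ^ 3 + 3 * g ^ 2)%N].
Proof.
case: g x => [|gp] x char0 g3 Hfr; first by [].
have hd := dimL Hfr char0 g3.
have hz := dim_center Hfr char0 g3.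
have h3 := size_H3 gp.+1.
have hb := bin2_mul gp.+1.
have [l0 Hl0] := stab_up Hfr char0 g3.
have Hlow := stab_low Hfr char0 g3.
exists (\dim (fullv : {vspace L}) - 2 * gp.+1)%N; split.
  split; last by move=> l; have := Hlow l; lia.
  exists l0; have := Hlow l0; lia.
rewrite hz; rewrite hd in Hl0 Hlow |- *; simpl in hb; split; nia.
Qed.
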